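(* Let $\ell^\infty\neq0$ be real. For $k\in\{1,2\}$ let $\Sigma^{(k)}$ be disjoint finite site sets, each consisting of real sites, complex sites and their conjugates, with multiplicities $m_\alpha\ge1$, levels $\ell^\alpha_{[p]}$ ($0\le p\le m_\alpha-1$, $\ell^\alpha_{[m_\alpha-1]}\ne0$) real for real sites and with $m_{\bar\alpha}=m_\alpha$, $\ell^{\bar\alpha}_{[p]}=\overline{\ell^\alpha_{[p]}}$ for conjugate sites, and pairwise distinct positions $z_\alpha$ real for real sites and $z_{\bar\alpha}=\overline{z_\alpha}$. Let $\chi_k(z)=\sum_{\alpha\in\Sigma^{(k)}}\sum_p\frac{\ell^\alpha_{[p]}}{(z-z_\alpha)^{p+1}}$, $\varphi_k=\chi_k-\ell^\infty$, $M_k=\sum_{\alpha\in\Sigma^{(k)}}m_\alpha$, $M=M_1+M_2$, with simple zeros $\zeta^{(1)}_i$ ($i\le M_1$) of $\varphi_1$ and $\zeta^{(2)}_i$ ($M_1<i\le M$) of $\varphi_2$. For real $\gamma\neq0$ let $\varphi_{1\otimes2,\gamma}(z)=\chi_1(z)+\chi_2(z-\gamma^{-1})-\ell^\infty$, with zeros $\zeta_i(\gamma)$ labelled for small $\gamma$ so that $\zeta_i(\gamma)=\zeta^{(1)}_i+O(\gamma)$ ($i\le M_1$) and $\zeta_i(\gamma)=\gamma^{-1}+\zeta^{(2)}_i+O(\gamma)$ ($i>M_1$). Fix $i\in\{1,\dots,M\}$, let $k=1$ if $i\le M_1$ and $k=2$ otherwise, and suppose $\zeta^{(k)}_i$ is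 real. Then for $\gamma$ small enough, $\zeta_i(\gamma)$ is real, and $\varphi_{1\otimes2,\gamma}'(\zeta_i(\gamma))$ and $\varphi_k'(\zeta^{(k)}_i)$ have the same sign. *)

(* Defs.v *)
From HB Require Import structures.
From mathcomp Require Import all_boot all_order all_algebra.
From mathcomp Require Import complex.
From mathcomp Require Import reals.
Set Implicit Arguments. Unset Strict Implicit. Unset Printing Implicit Defensive.
Import Order.TTheory GRing.Theory Num.Theory.
Local Open Scope ring_scope.
Local Open Scope complex_scope.

(* A finite site set: sites indexed by 'I_(nsites S); site a has position
   pos S a and the list of levels lev S a = [:: l_[0]; ...; l_[m_a - 1]]
   (so the multiplicity is m_a = size (lev S a)). *)
Record siteset (R : rcfType) := SiteSet {
  nsites : nat;
  pos : 'I_nsites -> R[i];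
  lev : 'I_nsites -> seq R[i] }.
Arguments nsites {R} s : rename.
Arguments pos {R} s _ : rename.
Arguments lev {R} s _ : rename.

(* For a real site (z_a real) distinctness forces b = a, hence real
     levels; non-real sites come in conjugate pairs. *)
Definition valid_siteset (R : rcfType) (S : siteset R) : Prop :=
  [/\ injective (pos S),
      (forall a, 0 < size (lev S a))%N,
      (forall a, last 0 (lev S a) != 0) &
      (forall a, exists b, pos S b = (pos S a)^* /\
                           lev S b = map (@conjc R) (lev S a))].

Definition mult (R : rcfType) (S : siteset R) : nat :=
  (\sum_(a < nsites S) size (lev S a))%N.

Definition chi (R : rcfType) (S : siteset R) (z : R[i]) : R[i] :=
  \sum_(a < nsites S) \sum_(p < size (lev S a))
     (lev S a)`_p / (z - pos S a) ^+ p.+1.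

Definition dchi (R : rcfType) (S : siteset R) (z : R[i]) : R[i] :=
  \sum_(a < nsites S) \sum_(p < size (lev S a))
     - ((p.+1)%:R * (lev S a)`_p) / (z - pos S a) ^+ p.+2.

Definition nonpole (R : rcfType) (S : siteset R) (z : R[i]) : Prop :=
  forall a, z != pos S a.

Definition phi (R : rcfType) (S : siteset R) (linf : R) (z : R[i]) : R[i] :=
  chi S z - linf%:C.

Definition is_zero (R : rcfType) (S : siteset R) (linf : R) (z : R[i]) : Prop :=
  nonpole S z /\ phi S linf z = 0.

Definition phi12 (R : rcfType) (S1 S2 : siteset R) (linf gam : R) (z : R[i]) : R[i] :=
  chi S1 z + chi S2 (z - (gam^-1)%:C) - linf%:C.

Definition dphi12 (R : rcfType) (S1 S2 : siteset R) (gam : R) (z : R[i]) : R[i] :=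
  dchi S1 z + dchi S2 (z - (gam^-1)%:C).

Definition is_zero12 (R : rcfType) (S1 S2 : siteset R) (linf gam : R) (z : R[i]) : Prop :=
  [/\ nonpole S1 z, nonpole S2 (z - (gam^-1)%:C) & phi12 S1 S2 linf gam z = 0].

(* Main.v *)
Require Import Defs.
From HB Require Import structures.
From mathcomp Require Import all_boot all_order all_algebra.
From mathcomp Require Import complex.
From mathcomp Require Import reals.
From mathcomp Require Import ring lra zify.
Import Order.TTheory GRing.Theory Num.Theory.
Local Open Scope ring_scope.
Local Open Scope complex_scope.

Set Implicit Arguments. Unset Strict Implicit. Unset Printing Implicit Defensive.

Section Lim.
Variable R : rcfType.
Implicit Types x y : R[i].

Definition nc x : R := complex.Re `|x|.

Lemma ncE x : `|x| = (nc x)%:C.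
Proof. rewrite /nc RRe_real //; exact: normr_real. Qed.

Lemma nc_ge0 x : 0 <= nc x.
Proof. rewrite -lecR -ncE; exact: normr_ge0. Qed.

Lemma ncD x y : nc (x + y) <= nc x + nc y.
Proof. by rewrite -lecR rmorphD /= -!ncE ler_normD. Qed.

Lemma ncM x y : nc (x * y) = nc x * nc y.
Proof. by apply: complexI; rewrite rmorphM /= -!ncE normrM. Qed.

Lemma ncV x : nc (x^-1) = (nc x)^-1.
Proof. by apply: complexI; rewrite -ncE normfV ncE fmorphV. Qed.

Lemma ncN x : nc (- x) = nc x.
Proof. by apply: complexI; rewrite -!ncE normrN. Qed.

Lemma nc_eq0 x : (nc x == 0) = (x == 0).
Proof. by rewrite -(inj_eq (@complexI R)) -ncE /= normr_eq0. Qed.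

Lemma ncC (r : R) : nc r%:C = `|r|.
Proof. by apply: complexI; rewrite -ncE normc_def /= expr0n /= addr0 sqrtr_sqr. Qed.

Lemma ncJ x : nc (x^*) = nc x.
Proof. by apply: complexI; rewrite -!ncE normcJ. Qed.

Lemma ncRe x : `|complex.Re x| <= nc x.
Proof. by rewrite -lecR -ncE normc_ge_Re. Qed.

Lemma ncB x y : nc x - nc y <= nc (x - y).
Proof. have := ncD (x - y) y; rewrite subrK; lra. Qed.

Lemma ncBC x y : nc (x - y) = nc (y - x).
Proof. by rewrite -ncN opprB. Qed.

Lemma nc0 : nc 0 = 0.
Proof. by apply/eqP; rewrite nc_eq0. Qed.

Lemma ncX x n : nc (x ^+ n) = nc x ^+ n.
Proof.
elim: n => [|n IH]; last by rewrite !exprS ncM IH.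
by rewrite !expr0; apply: complexI; rewrite -ncE normr1.
Qed.

Lemma half_split (a b : R) : 0 < b -> a / 2 = b * (a / (2 * b)).
Proof. by move=> b0; field; rewrite gt_eqF. Qed.

Lemma sq_split (e c : R) : e * (c / 2 * c) = e * c ^+ 2 / 2.
Proof. by rewrite expr2; field. Qed.

Definition lim0 (f : R -> R[i]) (L : R[i]) :=
  forall e : R, 0 < e -> exists2 d : R, 0 < d &
    forall g : R, 0 < `|g| < d -> nc (f g - L) < e.

Lemma lim0_ext f h L : (forall g, g != 0 -> f g = h g) -> lim0 f L -> lim0 h L.
Proof.
move=> fh fL e e0; have [d d0 H] := fL e e0; exists d => // g /andP[g0 gd].
rewrite -fh; first by apply: H; rewrite g0.
by rewrite -normr_gt0.
Qed.

Lemma lim0_cst c : lim0 (fun _ => c) c.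
Proof. by move=> e e0; exists 1 => // g _; rewrite subrr nc0. Qed.

Lemma lim0_C : lim0 (fun g => g%:C) 0.
Proof. by move=> e e0; exists e => // g /andP[_ ge]; rewrite subr0 ncC. Qed.

Lemma lim0_two f h L M (P : R -> Prop) :
  lim0 f L -> lim0 h M -> forall e1 e2, 0 < e1 -> 0 < e2 ->
  exists2 d : R, 0 < d & forall g : R, 0 < `|g| < d ->
    nc (f g - L) < e1 /\ nc (h g - M) < e2.
Proof.
move=> fL hM e1 e2 e10 e20.
have [d1 d10 H1] := fL e1 e10; have [d2 d20 H2] := hM e2 e20.
exists (Num.min d1 d2); first by rewrite lt_min d10.
move=> g /andP[g0]; rewrite lt_min => /andP[g1 g2].
by split; [apply: H1 | apply: H2]; rewrite g0.
Qed.

Lemma lim0_add f h L M : lim0 f L -> lim0 h M -> lim0 (fun g => f g + h g) (L + M).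
Proof.
move=> fL hM e e0.
have e20 : 0 < e / 2 by lra.
have [d d0 H] := lim0_two (fun _ => True) fL hM e20 e20.
exists d => // g /H [H1 H2].
have := ncD (f g - L) (h g - M).
have -> : f g - L + (h g - M) = f g + h g - (L + M) by rewrite opprD !addrA; congr (_ + _); rewrite addrAC.
lra.
Qed.

Lemma lim0_opp f L : lim0 f L -> lim0 (fun g => - f g) (- L).
Proof. by move=> fL e e0; have [d d0 H] := fL e e0; exists d => // g /H; rewrite -opprD ncN. Qed.

Lemma lim0_sub f h L M : lim0 f L -> lim0 h M -> lim0 (fun g => f g - h g) (L - M).
Proof. by move=> fL hM; apply: lim0_add => //; apply: lim0_opp. Qed.

Lemma lim0_mul f h L M : lim0 f L -> lim0 h M -> lim0 (fun g => f g * h g) (L * M).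
Proof.
move=> fL hM e e0.
have nL := nc_ge0 L; have nM := nc_ge0 M.
pose e1 := e / (2 * (nc M + 1)); pose e2 := Num.min 1 (e / (2 * (nc L + 1))).
have e10 : 0 < e1 by rewrite /e1 divr_gt0 //; lra.
have e20 : 0 < e2 by rewrite /e2 lt_min ltr01 divr_gt0 //; lra.
have [d d0 H] := lim0_two (fun _ => True) fL hM e10 e20.
exists d => // g /H [H1 H2].
have E : f g * h g - L * M = (f g - L) * h g + L * (h g - M).
  by rewrite mulrBl mulrBr addrA subrK.
rewrite E; apply: (le_lt_trans (ncD _ _)); rewrite !ncM.
have H2a : nc (h g - M) < 1 by apply: (lt_le_trans H2); rewrite /e2 ge_min lexx.
have H2b : nc (h g - M) < e / (2 * (nc L + 1)) by apply: (lt_le_trans H2); rewrite /e2 ge_min lexx orbT.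
have hb : nc (h g) <= nc M + 1.
  have := ncD (h g - M) M; rewrite subrK; lra.
have A : nc (f g - L) * nc (h g) <= e / 2.
  have -> : e / 2 = e1 * (nc M + 1) by rewrite /e1 invfM mulrA -mulrA mulVf ?mulr1 //; lra.
  apply: ler_pM; rewrite ?nc_ge0 //; lra.
have B : nc L * nc (h g - M) < e / 2.
  have -> : e / 2 = (nc L + 1) * (e / (2 * (nc L + 1))).
    by rewrite (@half_split e (nc L + 1)) //; lra.
  have := nc_ge0 (h g - M).
  have : 0 < e / (2 * (nc L + 1)) by rewrite divr_gt0 //; lra.
  nra.
lra.
Qed.

Lemma lim0_inv f L : L != 0 -> lim0 f L -> lim0 (fun g => (f g)^-1) L^-1.
Proof.
move=> L0 fL e e0.
have nL : 0 < nc L by rewrite lt_def nc_eq0 L0 nc_ge0.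
pose e1 := Num.min (nc L / 2) (e * (nc L)^+2 / 2).
have e10 : 0 < e1 by rewrite lt_min !divr_gt0 ?mulr_gt0 ?exprn_gt0.
have [d d0 H] := fL e1 e10.
exists d => // g /H H1.
have H1a : nc (f g - L) < nc L / 2 by apply: (lt_le_trans H1); rewrite ge_min lexx.
have H1b : nc (f g - L) < e * (nc L)^+2 / 2 by apply: (lt_le_trans H1); rewrite ge_min lexx orbT.
have fb : nc L / 2 < nc (f g).
  have := ncD (L - f g) (f g); rewrite subrK ncBC; lra.
have f0 : f g != 0 by rewrite -nc_eq0; apply/negP => /eqP f0; move: fb; rewrite f0; lra.
have -> : (f g)^-1 - L^-1 = (L - f g) / (f g * L).
  by field; rewrite L0 f0.
rewrite ncM ncV ncM ncBC.
rewrite ltr_pdivrMr ?mulr_gt0 //; last by lra.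
have : (nc L / 2) * nc L <= nc (f g) * nc L by rewrite ler_pM2r //; lra.
have := sq_split e (nc L).
nra.
Qed.

Lemma lim0_exp f L n : lim0 f L -> lim0 (fun g => f g ^+ n) (L ^+ n).
Proof.
move=> fL; elim: n => [|n IH]; first exact: lim0_cst.
rewrite exprS; apply: (lim0_ext _ (lim0_mul fL IH)) => g _; by rewrite exprS.
Qed.

Lemma lim0_sum (I : Type) (r : seq I) (P : pred I) (f : I -> R -> R[i]) (L : I -> R[i]) :
  (forall a, lim0 (f a) (L a)) ->
  lim0 (fun g => \sum_(a <- r | P a) f a g) (\sum_(a <- r | P a) L a).
Proof.
move=> H; elim: r => [|a r IH].
  rewrite big_nil; apply: (lim0_ext _ (lim0_cst 0)) => g _; by rewrite big_nil.
rewrite big_cons; case Pa: (P a).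
  apply: (lim0_ext _ (lim0_add (H a) IH)) => g _; by rewrite big_cons Pa.
apply: (lim0_ext _ IH) => g _; by rewrite big_cons Pa.
Qed.

End Lim.

Section Alg.
Variable R : rcfType.
Implicit Types z w u v : R[i].
Implicit Types S : siteset R.

Definition Dsum (u v : R[i]) (p : nat) : R[i] :=
  \sum_(j < p.+1) (u^-1)^+((p - j).+1) * (v^-1)^+(j.+1).

Definition Dd S z w : R[i] :=
  \sum_(a < nsites S) \sum_(p < size (lev S a))
    - (lev S a)`_p * Dsum (z - pos S a) (w - pos S a) p.

Lemma term_diff u v p : u != 0 -> v != 0 ->
  u^-1^+p.+1 - v^-1^+p.+1 = (v - u) * Dsum u v p.
Proof.
move=> u0 v0.
have E : Dsum u v p = (u^-1 * v^-1) * \sum_(j < p.+1) u^-1 ^+ (p - j) * v^-1 ^+ j.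
  rewrite /Dsum big_distrr /=; apply: eq_bigr => j _; rewrite !exprS; ring.
rewrite E subrXX /= mulrA; congr (_ * _); by field; rewrite u0 v0.
Qed.

Lemma Dsum_diag u p : Dsum u u p = (u^-1 ^+ p.+2) *+ p.+1.
Proof.
rewrite /Dsum (eq_bigr (fun _ => u^-1 ^+ p.+2)); first by rewrite sumr_const card_ord.
move=> j _; rewrite -exprD addSn addnS subnK //; rewrite -ltnS; exact: ltn_ord.
Qed.

Lemma chi_diff S z w : nonpole S z -> nonpole S w ->
  chi S z - chi S w = (z - w) * Dd S z w.
Proof.
move=> nz nw; rewrite /chi /Dd -sumrB big_distrr /=; apply: eq_bigr => a _.
rewrite -sumrB big_distrr /=; apply: eq_bigr => p _.
have u0 : z - pos S a != 0 by rewrite subr_eq0; exact: nz.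
have v0 : w - pos S a != 0 by rewrite subr_eq0; exact: nw.
rewrite -!exprVn -mulrBr term_diff //.
have -> : w - pos S a - (z - pos S a) = - (z - w) by ring.
ring.
Qed.

Lemma dchi_Dd S z : dchi S z = Dd S z z.
Proof.
rewrite /dchi /Dd; apply: eq_bigr => a _; apply: eq_bigr => p _.
rewrite Dsum_diag -exprVn; ring.
Qed.

Lemma conj_perm S : valid_siteset S ->
  exists2 s : 'I_(nsites S) -> 'I_(nsites S), injective s &
    forall a, pos S (s a) = (pos S a)^* /\ lev S (s a) = map (@conjc R) (lev S a).
Proof.
case=> inj _ _ H; have [s Hs] := fin_all_exists H.
exists s => // a b sab.
apply: inj; have [A _] := Hs a; have [B _] := Hs b.
by rewrite -[pos S a]conjcK -A sab B conjcK.
Qed.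

Lemma chiJ S z : valid_siteset S -> chi S (z^*) = (chi S z)^*.
Proof.
move=> /conj_perm [s sinj Hs]; rewrite /chi (reindex_inj sinj) rmorph_sum.
apply: eq_bigr => a _; have [A B] := Hs a.
rewrite A B.
rewrite -(big_mkord xpredT (fun p => (map (@conjc R) (lev S a))`_p / (z^* - (pos S a)^*) ^+ p.+1)).
rewrite size_map big_mkord rmorph_sum; apply: eq_bigr => p _.
by rewrite (nth_map 0) // rmorphM fmorphV rmorphXn rmorphB.
Qed.

Lemma dchiJ S z : valid_siteset S -> dchi S (z^*) = (dchi S z)^*.
Proof.
move=> /conj_perm [s sinj Hs]; rewrite /dchi (reindex_inj sinj) rmorph_sum.
apply: eq_bigr => a _; have [A B] := Hs a.
rewrite A B.
rewrite -(big_mkord xpredT (fun p : nat => - ((p.+1)%:R * (map (@conjc R) (lev S a))`_p) / (z^* - (pos S a)^*) ^+ p.+2)).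
rewrite size_map big_mkord rmorph_sum; apply: eq_bigr => p _.
by rewrite (nth_map 0) // rmorphM rmorphN rmorphM fmorphV rmorphXn rmorphB rmorph_nat.
Qed.

Lemma nonpoleJ S z : valid_siteset S -> nonpole S z -> nonpole S (z^*).
Proof.
move=> /conj_perm [s sinj Hs] nz a; apply/eqP => E.
have [b Eb] : exists b, s b = a.
  have : a \in codom s by rewrite (inj_card_onto sinj) ?card_ord.
  by case/codomP => b ->; exists b.
have [A _] := Hs b; have := nz b; rewrite -[pos S b]conjcK -A Eb -E conjcK.
by rewrite eqxx.
Qed.

End Alg.

Section Poly.
Variable R : rcfType.
Variable S : siteset R.
Variable linf : R.
Local Notation n := (nsites S).
Local Notation m a := (size (lev S a)).

Definition XP a : {poly R[i]} := 'X - (pos S a)%:P.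
Definition Qp : {poly R[i]} := \prod_(a < n) XP a ^+ m a.
Definition Qap a p : {poly R[i]} := locked (
  XP a ^+ (m a - p.+1) * \prod_(b < n | b != a) XP b ^+ m b).

Lemma XP_monic a : XP a \is monic.
Proof. exact: monicXsubC. Qed.

Lemma QapE a p : (p < m a)%N -> Qap a p * XP a ^+ p.+1 = Qp.
Proof. by move=> lt; rewrite /Qp (bigD1 a) //= /Qap -lock mulrAC -exprD subnK. Qed.

Lemma Qp_monic : Qp \is monic.
Proof. by apply: monic_prod => a _; apply: monic_exp; apply: XP_monic. Qed.

Lemma Qp_neq0 : Qp != 0.
Proof. exact: monic_neq0 Qp_monic. Qed.

Lemma size_Qp : size Qp = (mult S).+1.
Proof.
rewrite /Qp size_prod; last by move=> a _; rewrite expf_neq0 // polyXsubC_eq0.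
rewrite (eq_bigr (fun a => m a + 1)%N); last by move=> a _; rewrite size_exp_XsubC addn1.
rewrite big_split /= (sum_nat_const predT) /mult cardE size_enum_ord.
set M := (\sum_(i < n) _)%N; lia.
Qed.

Lemma size_Qap a p : (p < m a)%N -> size (Qap a p) = (mult S - p)%N.
Proof.
move=> lt; have E := QapE lt.
have Q0 : Qap a p != 0.
  by apply: contraNneq Qp_neq0 => Z; rewrite -E Z mul0r.
have := size_Mmonic Q0 (monic_exp p.+1 (XP_monic a)).
rewrite E size_Qp size_exp_XsubC => H; lia.
Qed.

Lemma horner_XP x a : (XP a).[x] = x - pos S a.
Proof. by rewrite /XP hornerXsubC. Qed.

Lemma Qp_horner_neq0 x : nonpole S x -> Qp.[x] != 0.
Proof.
move=> nx; rewrite /Qp horner_prod; apply/prodf_neq0 => a _.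
by rewrite horner_exp horner_XP expf_neq0 // subr_eq0 nx.
Qed.

Lemma Qap_horner x a p : nonpole S x -> (p < m a)%N ->
  (Qap a p).[x] = Qp.[x] / (x - pos S a) ^+ p.+1.
Proof.
move=> nx lt; have u0 : x - pos S a != 0 by rewrite subr_eq0 nx.
by rewrite -(QapE lt) hornerM horner_exp horner_XP mulfK // expf_neq0.
Qed.

Lemma Qap_dhorner x a p : nonpole S x -> (p < m a)%N ->
  (Qap a p)^`().[x] = Qp^`().[x] / (x - pos S a) ^+ p.+1
     - (p.+1)%:R * Qp.[x] / (x - pos S a) ^+ p.+2.
Proof.
move=> nx lt; have u0 : x - pos S a != 0 by rewrite subr_eq0 nx.
have h1 := Qap_horner nx lt.
have h2 : (Qap a p)^`().[x] * (x - pos S a) ^+ p.+1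
    + (Qap a p).[x] * ((x - pos S a) ^+ p *+ p.+1) = Qp^`().[x].
  rewrite -(QapE lt) derivM deriv_exp derivXsubC mul1r /= hornerD !hornerM.
  by rewrite hornerMn !horner_exp horner_XP.
rewrite -h2 h1 !exprS.
set u := x - pos S a; set U := u ^+ p.
have U0 : U != 0 by rewrite expf_neq0.
rewrite -mulr_natr; field; by rewrite U0 u0.
Qed.

Definition Np : {poly R[i]} :=
  \sum_(a < n) \sum_(p < m a) (lev S a)`_p *: Qap a p - linf%:C *: Qp.

Lemma Np_horner x : nonpole S x -> Np.[x] = Qp.[x] * phi S linf x.
Proof.
move=> nx; rewrite /Np /phi /chi hornerD hornerN hornerZ !horner_sum mulrBr.
congr (_ - _); last by rewrite mulrC.
rewrite big_distrr; apply: eq_bigr => a _ /=.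
rewrite horner_sum big_distrr; apply: eq_bigr => p _ /=.
by rewrite hornerZ Qap_horner // mulrCA mulrA.
Qed.

Lemma Np_dhorner x : nonpole S x ->
  Np^`().[x] = Qp^`().[x] * phi S linf x + Qp.[x] * dchi S x.
Proof.
move=> nx; rewrite /Np derivB derivZ !raddf_sum /= hornerD hornerN hornerZ !horner_sum.
have -> : \sum_(a < n) (\sum_(p < m a) (lev S a)`_p *: Qap a p)^`().[x]
   = Qp^`().[x] * chi S x + Qp.[x] * dchi S x.
  rewrite /chi /dchi !big_distrr -big_split; apply: eq_bigr => a _ /=.
  rewrite raddf_sum horner_sum !big_distrr -big_split; apply: eq_bigr => p _ /=.
  rewrite derivZ hornerZ Qap_dhorner //; ring.
rewrite /phi; ring.
Qed.

Lemma coef_Np_M : Np`_(mult S) = - linf%:C.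
Proof.
rewrite /Np coefB coefZ coef_sum big1 ?sub0r.
  have := Qp_monic; rewrite monicE /lead_coef size_Qp /= => /eqP ->.
  by rewrite mulr1.
move=> a _; rewrite coef_sum big1 // => p _.
have H : (Qap a p)`_(mult S) = 0 by apply: nth_default; rewrite size_Qap //; lia.
by rewrite coefZ H mulr0.
Qed.

Lemma size_Np : (size Np <= (mult S).+1)%N.
Proof.
apply/leq_sizeP => k kM.
rewrite /Np coefB coefZ coef_sum big1 ?sub0r.
  by rewrite nth_default ?mulr0 ?oppr0 // size_Qp.
move=> a _; rewrite coef_sum big1 // => p _.
have H : (Qap a p)`_k = 0 by apply: nth_default; rewrite size_Qap //; lia.
by rewrite coefZ H mulr0.
Qed.

End Poly.

Lemma dchi_neq0 (R : rcfType) (S : siteset R) (linf : R) (zs : seq R[i]) (zeta : R[i]) :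
  linf != 0 -> uniq zs -> size zs = mult S ->
  (forall x, x \in zs -> is_zero S linf x) -> zeta \in zs -> dchi S zeta != 0.
Proof.
move=> l0 uz sz Hz zin; apply/eqP => d0.
have [nz pz] := Hz _ zin.
have N0 : Np S linf != 0.
  apply/eqP => E; have := coef_Np_M S linf; rewrite E coef0 => /eqP.
  rewrite eq_sym oppr_eq0 => /eqP h; apply: (negP l0); apply/eqP; by case: h.
have r1 : root (Np S linf) zeta by rewrite rootE Np_horner // pz mulr0.
have [N1 E1] := factor_theorem _ _ r1.
have r2 : root N1 zeta.
  have := Np_dhorner linf nz; rewrite pz d0 !mulr0 addr0 E1 derivM derivXsubC mulr1.
  by rewrite hornerD hornerM hornerXsubC subrr mulr0 add0r rootE => ->.
have [N2 E2] := factor_theorem _ _ r2.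
have E : Np S linf = N2 * ('X - zeta%:P) ^+ 2 by rewrite E1 E2 -mulrA expr2.
have N20 : N2 != 0 by apply: contraNneq N0 => Z; rewrite E Z mul0r.
have sN : size (Np S linf) = (size N2 + 2)%N.
  rewrite E size_Mmonic //; first by by rewrite size_exp_XsubC addnS.
  by apply: monic_exp; apply: monicXsubC.
have := size_Np S linf; rewrite sN => sN2.
have ur : uniq (rem zeta zs) by apply: rem_uniq.
have ar : all (root N2) (rem zeta zs).
  apply/allP => x; rewrite (mem_rem_uniq _ uz) inE => /andP[xz xin].
  have [nx px] := Hz _ xin.
  have : (Np S linf).[x] = 0 by rewrite Np_horner // px mulr0.
  rewrite E hornerM horner_exp hornerXsubC => /eqP; rewrite mulf_eq0 expf_eq0 /= subr_eq0 (negPf xz) orbF.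
  by rewrite rootE.
have := max_poly_roots N20 ar ur; rewrite size_rem // sz.
have : (0 < mult S)%N by rewrite -sz; case: (zs) zin.
move=> h1 h2; move: sN2 h2 h1; case: (mult S) => [|k] /=; first by rewrite addn2. 
move=> A B _; move: A; rewrite -(addn2 k) leq_add2r => A.
by move: (leq_trans B A); rewrite ltnn.
Qed.

Section Main.
Variable R : rcfType.
Implicit Types S : siteset R.

Definition Dsum' (a b : R[i]) (p : nat) : R[i] :=
  \sum_(j < p.+1) a^+((p - j).+1) * b^+(j.+1).

Lemma lim_Dsum' A B a b p : lim0 A a -> lim0 B b ->
  lim0 (fun g => Dsum' (A g) (B g) p) (Dsum' a b p).
Proof.
move=> HA HB; apply: lim0_sum => j.
by apply: lim0_mul; apply: lim0_exp.
Qed.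

Lemma Dsum'0 p : Dsum' 0 0 p = 0.
Proof. by rewrite /Dsum' big1 // => j _; rewrite expr0n mul0r. Qed.

Lemma lim_Dd_gen S (z1 z2 : R -> R[i]) (c : 'I_(nsites S) -> R[i]) :
  (forall a, lim0 (fun g => (z1 g - pos S a)^-1) (c a)) ->
  (forall a, lim0 (fun g => (z2 g - pos S a)^-1) (c a)) ->
  lim0 (fun g => Dd S (z1 g) (z2 g))
    (\sum_(a < nsites S) \sum_(p < size (lev S a)) - (lev S a)`_p * Dsum' (c a) (c a) p).
Proof.
move=> H1 H2; apply: lim0_sum => a; apply: lim0_sum => p.
apply: lim0_mul; first exact: lim0_cst.
exact: lim_Dsum'.
Qed.

Lemma lim_near S (z : R -> R[i]) zeta a : nonpole S zeta -> lim0 z zeta ->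
  lim0 (fun g => (z g - pos S a)^-1) (zeta - pos S a)^-1.
Proof.
move=> nz hz; apply: lim0_inv; first by rewrite subr_eq0 nz.
by apply: lim0_sub => //; apply: lim0_cst.
Qed.

Lemma lim_far S (z : R -> R[i]) zeta (s : R[i]) a : s != 0 -> lim0 z zeta ->
  lim0 (fun g => (z g + s * (g^-1)%:C - pos S a)^-1) 0.
Proof.
move=> s0 hz.
have L : lim0 (fun g => g%:C * (g%:C * (z g - pos S a) + s)^-1) 0.
  have -> : (0 : R[i]) = 0 * (0 * (zeta - pos S a) + s)^-1 by rewrite !mul0r.
  apply: lim0_mul; first exact: lim0_C.
  apply: lim0_inv; first by rewrite mul0r add0r.
  apply: lim0_add; last exact: lim0_cst.
  apply: lim0_mul; first exact: lim0_C.
  by apply: lim0_sub => //; apply: lim0_cst.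
apply: lim0_ext L => g g0.
have G0 : g%:C != 0 :> R[i].
  by apply/eqP => h; apply: (negP g0); apply/eqP; case: h.
have -> : z g + s * (g^-1)%:C - pos S a = (g%:C * (z g - pos S a) + s) / g%:C.
  rewrite fmorphV /=; field; exact: G0.
by rewrite invfM invrK mulrC.
Qed.

Lemma keylim (Sn Sf : siteset R) (z1 z2 : R -> R[i]) zeta (s : R[i]) :
  nonpole Sn zeta -> lim0 z1 zeta -> lim0 z2 zeta -> s != 0 ->
  lim0 (fun g => Dd Sn (z1 g) (z2 g) + Dd Sf (z1 g + s * (g^-1)%:C) (z2 g + s * (g^-1)%:C))
       (dchi Sn zeta).
Proof.
move=> nz h1 h2 s0.
have A : lim0 (fun g => Dd Sn (z1 g) (z2 g)) (dchi Sn zeta).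
  have := lim_Dd_gen (c := fun a => (zeta - pos Sn a)^-1)
     (fun a => lim_near a nz h1) (fun a => lim_near a nz h2).
  congr lim0; rewrite dchi_Dd /Dd; apply: eq_bigr => a _; apply: eq_bigr => p _.
  by [].
have B : lim0 (fun g => Dd Sf (z1 g + s * (g^-1)%:C) (z2 g + s * (g^-1)%:C)) 0.
  have := lim_Dd_gen (S := Sf) (z1 := fun g => z1 g + s * (g^-1)%:C)
     (z2 := fun g => z2 g + s * (g^-1)%:C) (c := fun _ => 0)
     (fun a => lim_far a s0 h1) (fun a => lim_far a s0 h2).
  congr lim0; rewrite big1 // => a _; rewrite big1 // => p _.
  by rewrite Dsum'0 mulr0.
by have := lim0_add A B; rewrite addr0.
Qed.

End Main.

Section Aux.
Variable R : rcfType.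
Implicit Types S : siteset R.

Lemma Im0_conj (x : R[i]) : complex.Im x = 0 -> x^* = x.
Proof. by case: x => a b /= ->; rewrite oppr0. Qed.

Lemma conj_Im0 (x : R[i]) : x^* = x -> complex.Im x = 0.
Proof. case: x => a b /= [] h; lra. Qed.

Lemma phi12J S1 S2 linf g z : valid_siteset S1 -> valid_siteset S2 ->
  phi12 S1 S2 linf g (z^*) = (phi12 S1 S2 linf g z)^*.
Proof.
move=> v1 v2.
have e1 : (z - (g^-1)%:C)^* = z^* - (g^-1)%:C by rewrite rmorphB; congr (_ - _); exact: conjc_real.
by rewrite /phi12 rmorphB rmorphD /= -!chiJ // e1 oppr0.
Qed.

Lemma dphi12J S1 S2 g z : valid_siteset S1 -> valid_siteset S2 ->
  dphi12 S1 S2 g (z^*) = (dphi12 S1 S2 g z)^*.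
Proof.
move=> v1 v2.
have e1 : (z - (g^-1)%:C)^* = z^* - (g^-1)%:C by rewrite rmorphB; congr (_ - _); exact: conjc_real.
by rewrite /dphi12 rmorphD /= -!dchiJ // e1.
Qed.

Lemma phi12_diff S1 S2 linf g z w :
  nonpole S1 z -> nonpole S1 w -> nonpole S2 (z - (g^-1)%:C) -> nonpole S2 (w - (g^-1)%:C) ->
  phi12 S1 S2 linf g z - phi12 S1 S2 linf g w =
  (z - w) * (Dd S1 z w + Dd S2 (z - (g^-1)%:C) (w - (g^-1)%:C)).
Proof.
move=> n1 n2 n3 n4.
have E : phi12 S1 S2 linf g z - phi12 S1 S2 linf g w =
  (chi S1 z - chi S1 w) + (chi S2 (z - (g^-1)%:C) - chi S2 (w - (g^-1)%:C)).
  rewrite /phi12; ring.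
rewrite E !chi_diff //.
have -> : z - (g^-1)%:C - (w - (g^-1)%:C) = z - w by ring.
ring.
Qed.

Lemma lim0_ev_neq0 f (L : R[i]) : lim0 f L -> L != 0 ->
  exists2 d : R, 0 < d & forall g, 0 < `|g| < d -> f g != 0.
Proof.
move=> fL L0; have nL : 0 < nc L by rewrite lt_def nc_eq0 L0 nc_ge0.
have [d d0 H] := fL _ nL; exists d => // g /H h.
apply/eqP => f0; move: h; rewrite f0 sub0r ncN; lra.
Qed.

Lemma sg_close (x y : R) : `|x - y| < `|y| -> Num.sg x = Num.sg y.
Proof.
have [y0|y0|->] := ltrgtP y 0.
- rewrite (ltr0_norm y0) ltr_norml => /andP[_ h].
  by rewrite !ltr0_sg //; lra.
- rewrite (gtr0_norm y0) ltr_norml => /andP[h _].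
  by rewrite !gtr0_sg //; lra.
- by rewrite normr0 ltNge normr_ge0.
Qed.

Lemma lim0_sg f (L : R[i]) : lim0 f L -> complex.Re L != 0 ->
  exists2 d : R, 0 < d & forall g, 0 < `|g| < d ->
    Num.sg (complex.Re (f g)) = Num.sg (complex.Re L).
Proof.
move=> fL L0; have nL : 0 < `|complex.Re L| by rewrite normr_gt0.
have [d d0 H] := fL _ nL; exists d => // g /H h.
apply: sg_close; apply: le_lt_trans h.
have -> : complex.Re (f g) - complex.Re L = complex.Re (f g - L) by rewrite raddfB.
exact: ncRe.
Qed.

End Aux.

Section Fin.
Variable R : rcfType.

Lemma lab_lim (f : R -> R[i]) zeta c d1 : 0 < d1 ->
  (forall g, 0 < `|g| < d1 -> `|f g - zeta| <= (c * `|g|)%:C) -> lim0 f zeta.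
Proof.
move=> d10 H e e0.
have c1 : 0 < `|c| + 1 by have := normr_ge0 c; lra.
exists (Num.min d1 (e / (`|c| + 1))); first by rewrite lt_min d10 divr_gt0.
move=> g /andP[g0]; rewrite lt_min => /andP[gd1 gd2].
have := H g; rewrite g0 gd1 ncE lecR => /(_ isT) h.
have cg : c * `|g| <= `|c| * `|g| by rewrite ler_wpM2r // ?normr_ge0 // ler_norm.
have : `|g| * (`|c| + 1) < e by rewrite -ltr_pdivlMr.
have := normr_ge0 c.
nra.
Qed.

Lemma finish (S1 S2 : siteset R) linf (zt : R -> R[i]) (L : R[i]) d0 :
  valid_siteset S1 -> valid_siteset S2 -> 0 < d0 ->
  (forall g, 0 < `|g| < d0 -> is_zero12 S1 S2 linf g (zt g)) ->
  lim0 (fun g => Dd S1 (zt g) (zt g)^* + Dd S2 (zt g - (g^-1)%:C) ((zt g)^* - (g^-1)%:C)) L ->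
  lim0 (fun g => dphi12 S1 S2 g (zt g)) L ->
  L != 0 -> complex.Im L = 0 -> complex.Re L != 0 ->
  exists2 d : R, 0 < d & forall g : R, 0 < `|g| < d ->
    [/\ complex.Im (zt g) = 0, complex.Im (dphi12 S1 S2 g (zt g)) = 0,
        complex.Im L = 0 &
        Num.sg (complex.Re (dphi12 S1 S2 g (zt g))) = Num.sg (complex.Re L)].
Proof.
move=> v1 v2 d00 H0 HD Hd L0 LI LR.
have [d2 d20 H2] := lim0_ev_neq0 HD L0.
have [d3 d30 H3] := lim0_sg Hd LR.
exists (Num.min d0 (Num.min d2 d3)); first by rewrite !lt_min d00 d20 d30.
move=> g /andP[g0]; rewrite !lt_min => /andP[gd0 /andP[gd2 gd3]].
have ga0 : 0 < `|g| < d0 by rewrite g0 gd0.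
have ga2 : 0 < `|g| < d2 by rewrite g0 gd2.
have ga3 : 0 < `|g| < d3 by rewrite g0 gd3.
have [n1 n2 p0] := H0 g ga0.
have n1' := nonpoleJ v1 n1.
have n2' := nonpoleJ v2 n2.
have e1 : (zt g - (g^-1)%:C)^* = (zt g)^* - (g^-1)%:C.
  by rewrite rmorphB; congr (_ - _); exact: conjc_real.
rewrite e1 in n2'.
have pJ : phi12 S1 S2 linf g (zt g)^* = 0 by rewrite phi12J // p0 conjc0.
have := phi12_diff linf n1 n1' n2 n2'; rewrite p0 pJ subrr => /esym/eqP.
rewrite mulf_eq0 (negPf (H2 g ga2)) orbF subr_eq0 => /eqP E.
have Im0 : complex.Im (zt g) = 0 by apply: conj_Im0; rewrite -E.
split => //.
  by apply: conj_Im0; rewrite -dphi12J // -E.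
exact: H3 ga3.
Qed.

End Fin.

Lemma count_block (M1 M2 : nat) (b : bool) :
  count (fun j : 'I_(M1 + M2) => (j < M1)%N == b) (enum 'I_(M1 + M2))
  = if b then M1 else M2.
Proof.
have -> : count (fun j : 'I_(M1 + M2) => (j < M1)%N == b) (enum 'I_(M1 + M2))
   = count (fun k => (k < M1)%N == b) (map val (enum 'I_(M1 + M2))) by rewrite count_map.
rewrite val_enum_ord iotaD count_cat add0n.
rewrite (@eq_in_count _ _ (fun _ => b)); last by move=> k; rewrite mem_iota add0n => /andP[_ ->]; case: b.
rewrite [X in (_ + X)%N](@eq_in_count _ _ (fun _ => ~~ b)); last first.
  by move=> k; rewrite mem_iota => /andP[h _]; rewrite ltnNge h; case: b.
case: b.
  by rewrite count_predT size_iota (@eq_count _ _ pred0) // count_pred0 addn0.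
by rewrite (@eq_count _ _ pred0) // count_pred0 count_predT size_iota.
Qed.

Unset Implicit Arguments. Set Strict Implicit. Set Printing Implicit Defensive.

Theorem lemmaC4 (R : realType) (linf : R) (S1 S2 : siteset R)
  (zeta : 'I_(mult S1 + mult S2) -> R[i])
  (i : 'I_(mult S1 + mult S2))
  (zt : R -> R[i]) :
  linf != 0 ->
  valid_siteset S1 -> valid_siteset S2 ->
  (forall j : 'I_(mult S1 + mult S2),
     if (j < mult S1)%N then is_zero S1 linf (zeta j)
     else is_zero S2 linf (zeta j)) ->
  (forall j1 j2 : 'I_(mult S1 + mult S2),
     (j1 < mult S1)%N = (j2 < mult S1)%N -> zeta j1 = zeta j2 -> j1 = j2) ->
  (exists2 d : R, 0 < d & forall gam : R, 0 < `|gam| < d ->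
     is_zero12 S1 S2 linf gam (zt gam)) ->
  (exists c : R, exists2 d : R, 0 < d & forall gam : R, 0 < `|gam| < d ->
     `|zt gam - (zeta i + (if (i < mult S1)%N then 0 else (gam^-1)%:C))|
       <= (c * `|gam|)%:C) ->
  complex.Im (zeta i) = 0 ->
  exists2 d : R, 0 < d & forall gam : R, 0 < `|gam| < d ->
    [/\ complex.Im (zt gam) = 0,
        complex.Im (dphi12 S1 S2 gam (zt gam)) = 0,
        complex.Im (dchi (if (i < mult S1)%N then S1 else S2) (zeta i)) = 0 &
        Num.sg (complex.Re (dphi12 S1 S2 gam (zt gam)))
          = Num.sg (complex.Re (dchi (if (i < mult S1)%N then S1 else S2) (zeta i)))].
Proof.
move=> l0 v1 v2 Hz Hinj [d0 d00 H0] [c [d1 d10 H1]] Imz.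
set b := (i < mult S1)%N in H1 *.
set Sk := if b then S1 else S2.
have vk : valid_siteset Sk by rewrite /Sk; case: (b).
have zk : is_zero Sk linf (zeta i) by have := Hz i; rewrite /Sk /b; case: ifP.
have zJ : (zeta i)^* = zeta i := Im0_conj Imz.
pose P := fun j : 'I_(mult S1 + mult S2) => (j < mult S1)%N == b.
have dk0 : dchi Sk (zeta i) != 0.
  apply: (@dchi_neq0 _ Sk linf (map zeta (filter P (enum 'I_(mult S1 + mult S2))))) => //.
  - rewrite map_inj_in_uniq; first by apply: filter_uniq; apply: enum_uniq.
    move=> j1 j2; rewrite !mem_filter /P => /andP[/eqP h1 _] /andP[/eqP h2 _].
    by apply: Hinj; rewrite h1 h2.
  - by rewrite size_map size_filter count_block /Sk; case: (b).
  - move=> x /mapP [j]; rewrite mem_filter /P => /andP[/eqP hj _] ->.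
    by have := Hz j; rewrite /Sk hj; case: (b).
  - by apply: map_f; rewrite mem_filter /P eqxx mem_enum.
have dkIm : complex.Im (dchi Sk (zeta i)) = 0 by apply: conj_Im0; rewrite -dchiJ // zJ.
have dkRe : complex.Re (dchi Sk (zeta i)) != 0.
  move: dk0 dkIm; case: (dchi Sk (zeta i)) => a a' /= h h'.
  by apply: contraNneq h => ha; rewrite ha h'.
have zk' := zk; case: zk' => nk _.
move: H1 nk dk0 dkIm dkRe; rewrite /Sk /b; case: ifP => bE H1 nk dk0 dkIm dkRe.
- have l1 : lim0 zt (zeta i).
    by apply: (lab_lim (c := c) d10) => g /H1; rewrite addr0.
  have l2 : lim0 (fun g => (zt g)^*) (zeta i).
    move=> e e0; have [d d0' Hd] := l1 e e0; exists d => // g /Hd.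
    by rewrite -zJ -rmorphB ncJ zJ.
  have s0 : (-1 : R[i]) != 0 by rewrite oppr_eq0 oner_eq0.
  apply: (finish v1 v2 d00 H0) => //.
  + have K := keylim S2 nk l1 l2 (s := -1) s0.
    apply: (lim0_ext _ K) => g _; by rewrite !mulN1r.
  + have K2 := keylim S2 nk l1 l1 (s := -1) s0.
    apply: (lim0_ext _ K2) => g _; by rewrite /dphi12 !dchi_Dd !mulN1r.
- pose w := fun g : R => zt g - (g^-1)%:C.
  have l1 : lim0 w (zeta i).
    apply: (lab_lim (c := c) d10) => g /H1.
    by have -> : zt g - (zeta i + (g^-1)%:C) = w g - zeta i by rewrite /w; ring.
  have l2 : lim0 (fun g => (w g)^*) (zeta i).
    move=> e e0; have [d d0' Hd] := l1 e e0; exists d => // g /Hd.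
    by rewrite -zJ -rmorphB ncJ zJ.
  have s0 : (1 : R[i]) != 0 by rewrite oner_eq0.
  have wJ g : (w g)^* = (zt g)^* - (g^-1)%:C.
    by rewrite /w rmorphB; congr (_ - _); exact: conjc_real.
  apply: (finish v1 v2 d00 H0) => //.
  + have K := keylim S1 nk l1 l2 s0.
    apply: (lim0_ext _ K) => g _; rewrite !mul1r wJ addrC !subrK; by [].
  + have K2 := keylim S1 nk l1 l1 s0.
    apply: (lim0_ext _ K2) => g _; rewrite /dphi12 !dchi_Dd !mul1r /w subrK addrC; by [].
Qed.
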